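(* Let $V$ be a crossed module and $M$ an abelian $\pi_0(V)$-module. A $2$-cochain $z\in C^2(V,M)$ is a $2$-cocycle if and only if: (a) $z(m,h,g)=z_M(m)-z_G(\mu(m),h)+z_G(h,g)$ for all $m\in M_V$, $g,h\in G_V$; (b) $z_G\in Z^2(G_V,M)$ (group $2$-cocycle, $G_V$ acting on $M$ via $G_V\to\pi_0(V)$); (c) $z_M(nm)=z_M(n)+z_M(m)-z_G(\mu(n),\mu(m))$ for all $m,n\in M_V$; (d) $z_M({}^gm)=\bar g\cdot z_M(m)+z_G(\mu({}^gm),g)-z_G(g,\mu(m))$ for all $m\in M_V$, $g\in G_V$.
   Context: Crossed module $V$: group $G_V$, group $M_V$ with left $G_V$-action ${}^gm$, homomorphism $\mu:M_V\to G_V$ with $\mu({}^gm)=g\mu(m)g^{-1}$, ${}^{\mu(n)}m=nmn^{-1}$; $\pi_0(V)=G_V/\mu(M_V)$, $\bar g$ the class of $g$. The cochain complex of $V$ with coefficients in $M$ has $C^2(V,M)=\mathrm{Map}(M_V\times G_V\times G_V,M)$, $C^3(V,M)=\mathrm{Map}(M_V\times M_V\times G_V\times M_V\times G_V\times G_V,M)$, with $(dc)(p,n,k,m,h,g)=c(p,\mu(n)k,\mu(m)h)-c(pn,k,hg)+c(n\,{}^km,kh,g)-\bar k\cdot c(m,h,g)$; $Z^2(V,M)$ is the kernel. For $c\in C^2(V,M)$: module part $c_M(m):=c(m,1,1)$, group part $c_G(h,g):=c(1,h,g)$. Group cochains: $C^2(\Pi,M)=\mathrm{Map}(\Pi^2,M)$,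 $(dc)(r,q,p)=c(r,q)-c(r,qp)+c(rq,p)-r\cdot c(q,p)$. *)

(* Defs.v *)
(* abelian groups are zmodType; general (possibly infinite)
   groups are given by an explicit record. *)
From HB Require Import structures.
From mathcomp Require Import all_boot all_algebra.
Set Implicit Arguments. Unset Strict Implicit. Unset Printing Implicit Defensive.
Import GRing.Theory.
Local Open Scope ring_scope.

Record Group := {
  gcar :> Type;
  gmul : gcar -> gcar -> gcar;
  gone : gcar;
  ginv : gcar -> gcar;
  gmulA : forall x y z, gmul x (gmul y z) = gmul (gmul x y) z;
  gmul1x : forall x, gmul gone x = x;
  gmulx1 : forall x, gmul x gone = x;
  gmulVx : forall x, gmul (ginv x) x = gone;
  gmulxV : forall x, gmul x (ginv x) = gone
}.
Arguments gone {g}.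


Record CrossedModule := {
  GV : Group;
  MV : Group;
  xact : GV -> MV -> MV;
  xact1 : forall m, xact gone m = m;
  xactM : forall g h m, xact (gmul g h) m = xact g (xact h m);
  xact_mul : forall g m n, xact g (gmul m n) = gmul (xact g m) (xact g n);
  mu : MV -> GV;
  muM : forall m n, mu (gmul m n) = gmul (mu m) (mu n);
  mu_act : forall g m, mu (xact g m) = gmul (gmul g (mu m)) (ginv g);
  peiffer : forall n m, xact (mu n) m = gmul (gmul n m) (ginv n)
}.

(* An abelian pi_0(V)-module, where pi_0(V) = G_V / mu(M_V): an abelian
   group M with an additive G_V-action that is trivial on mu(M_V), i.e. an
   action of G_V factoring through the projection G_V -> pi_0(V).
   [pact g x] is  \bar g . x. *)
Record Pi0Module (V : CrossedModule) := {
  pcar : zmodType;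
  pact : GV V -> pcar -> pcar;
  pact_add : forall g x y, pact g (x + y) = pact g x + pact g y;
  pact1 : forall x, pact gone x = x;
  pactM : forall g h x, pact (gmul g h) x = pact g (pact h x);
  pact_mu : forall n x, pact (mu n) x = x
}.

Arguments pact {V} p g x : rename.

Definition C2 (V : CrossedModule) (M : Pi0Module V) :=
  MV V -> GV V -> GV V -> pcar M.

Definition d2 (V : CrossedModule) (M : Pi0Module V) (c : C2 M)
  (p n : MV V) (k : GV V) (m : MV V) (h g : GV V) : pcar M :=
  c p (gmul (mu n) k) (gmul (mu m) h) - c (gmul p n) k (gmul h g)
  + c (gmul n (xact k m)) (gmul k h) g - pact M k (c m h g).

Definition is_2cocycle (V : CrossedModule) (M : Pi0Module V) (c : C2 M) :=
  forall p n k m h g, d2 c p n k m h g = 0.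

Definition cM (V : CrossedModule) (M : Pi0Module V) (c : C2 M) (m : MV V) :=
  c m gone gone.
Definition cG (V : CrossedModule) (M : Pi0Module V) (c : C2 M) (h g : GV V) :=
  c gone h g.

(* Group 2-cocycles of G_V with coefficients in M (G_V acting through pi_0),
   with the paper's coboundary convention. *)
Definition is_group_2cocycle (V : CrossedModule) (M : Pi0Module V)
  (c : GV V -> GV V -> pcar M) :=
  forall r q p : GV V,
    c r q - c r (gmul q p) + c (gmul r q) p - pact M r (c q p) = 0.

(* Main.v *)
Require Import Defs.
From mathcomp Require Import all_boot all_algebra.
Import GRing.Theory.
Local Open Scope ring_scope.

Inductive ex := EAt of nat | E0 | EAdd of ex & ex | EOpp of ex.
Section L.
Variable M : zmodType.
Fixpoint ev (env : seq M) e := match e with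
 | EAt i => nth 0 env i | E0 => 0 | EAdd a b => ev env a + ev env b | EOpp a => - ev env a end.
Fixpoint addl (s t : seq int) := match s, t with
 | [::], t => t | s, [::] => s | x :: s', y :: t' => (x + y) :: addl s' t' end.
Fixpoint nrm e : seq int := match e with
 | EAt i => nseq i 0 ++ [:: 1] | E0 => [::] | EAdd a b => addl (nrm a) (nrm b)
 | EOpp a => map (fun x => - x) (nrm a) end.
Fixpoint evn (env : seq M) (s : seq int) := match s with
 | [::] => 0 | x :: s' => (head 0 env) *~ x + evn (behead env) s' end.
Lemma evn_add env s t : evn env (addl s t) = evn env s + evn env t.
Proof.
elim: s env t => [|x s IH] env [|y t] /=; rewrite ?add0r ?addr0 //.
by rewrite IH mulrzDr addrACA.
Qed.
Lemma evn_opp env s : evn env (map (fun x => - x) s) = - evn env s.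
Proof. elim: s env => [|x s IH] env /=; rewrite ?oppr0 // IH mulrNz opprD. by []. Qed.
Lemma evn_at env i : evn env (nseq i 0 ++ [:: 1]) = nth 0 env i.
Proof.
elim: i env => [|i IH] [|a env] /=; rewrite ?mulr0z ?add0r ?addr0 ?IH //.
by rewrite nth_nil.
Qed.
Lemma ev_evn env e : ev env e = evn env (nrm e).
Proof.
elim: e => [i||a IHa b IHb|a IHa] /=.
- by rewrite evn_at.
- by [].
- by rewrite evn_add IHa IHb.
- by rewrite evn_opp IHa.
Qed.
Lemma evn0 env s : all (fun x => x == 0) s -> evn env s = 0.
Proof.
elim: s env => [|x s IH] env //= /andP[/eqP -> Hs]; by rewrite mulr0z add0r IH.
Qed.
Lemma ev0 env e : all (fun x => x == 0) (nrm e) -> ev env e = 0.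
Proof. by move=> H; rewrite ev_evn evn0. Qed.
Lemma my_eq (x y : M) : x - y = 0 -> x = y.
Proof. by move/eqP; rewrite subr_eq0 => /eqP. Qed.
Lemma combP (a b x : M) : a = b -> x - (a - b) = 0 -> x = 0.
Proof. by move=> ->; rewrite subrr subr0. Qed.
Lemma combN (a b x : M) : a = b -> x + (a - b) = 0 -> x = 0.
Proof. by move=> ->; rewrite subrr addr0. Qed.
End L.
Arguments combP {M a b x}.
Arguments combN {M a b x}.
Arguments my_eq {M x y}.
Arguments ev0 {M env e}.
Arguments ev {M}.

Ltac lookup x l := lazymatch l with
 | x :: _ => constr:(0%N)
 | _ :: ?l' => let n := lookup x l' in constr:(S n) end.
Ltac app_end x l := lazymatch l with
 | nil => constr:(x :: nil)
 | ?h :: ?t => let t' := app_end x t in constr:(h :: t') end.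
Ltac collect e l := lazymatch e with
 | ?a + ?b => let l1 := collect a l in collect b l1
 | - ?a => collect a l
 | 0%R => l
 | _ => match constr:(tt) with
        | _ => let _ := lookup e l in l
        | _ => app_end e l end end.
Ltac reif e l := lazymatch e with
 | ?a + ?b => let x := reif a l in let y := reif b l in constr:(EAdd x y)
 | - ?a => let x := reif a l in constr:(EOpp x)
 | 0%R => constr:(E0)
 | _ => let n := lookup e l in constr:(EAt n) end.
Ltac zsolve0 := lazymatch goal with |- ?e = 0%R =>
  let T := type of e in
  let l := collect e (@nil T) in
  let r := reif e l in
  change (ev l r = 0%R); apply: ev0; vm_compute; reflexivity end.
Ltac linctx := lazymatch goal with
 | H : @eq ?T _ _ |- @eq ?T _ _ =>
      first [apply: (combP H); clear H; linctx | apply: (combN H); clear H; linctx]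
 | |- _ => zsolve0 end.
Ltac lin := intros; linctx.
Ltac linsolve := lazymatch goal with
 | |- _ -> _ => let H := fresh in move=> H; linsolve; move: H
 | |- _ = 0%R => idtac
 | |- _ => apply: my_eq end.

Section GG.
Variable GR : Defs.Group.
Lemma gmulVK (x y : GR) : gmul (ginv x) (gmul x y) = y.
Proof. by rewrite gmulA gmulVx gmul1x. Qed.
Lemma gidem (x : GR) : gmul x x = x -> x = gone.
Proof. move=> H. by rewrite -(gmulVK x x) H gmulVx. Qed.
End GG.

Lemma mu1 (V : CrossedModule) : mu (@gone (MV V)) = gone.
Proof. apply: gidem. by rewrite -muM gmul1x. Qed.
Lemma xact_1 (V : CrossedModule) (g : GV V) : xact g (@gone (MV V)) = gone.
Proof. apply: gidem. by rewrite -xact_mul gmul1x. Qed.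
Lemma pact0 (V : CrossedModule) (M : Pi0Module V) g : pact M g 0 = 0.
Proof.
have H := @pact_add _ M g 0 0. rewrite addr0 in H. apply: (addrI (pact M g 0)). by rewrite addr0 -H.
Qed.
Lemma pactN (V : CrossedModule) (M : Pi0Module V) g x : pact M g (- x) = - pact M g x.
Proof. apply/eqP; rewrite -subr_eq0 opprK -pact_add addNr pact0. by []. Qed.

Theorem proposition3p11 (V : CrossedModule) (M : Pi0Module V) (z : C2 M) :
  is_2cocycle z <->
  [/\ (forall (m : MV V) (h g : GV V),
         z m h g = cM z m - cG z (mu m) h + cG z h g),
      is_group_2cocycle (cG z),
      (forall n m : MV V,
         cM z (gmul n m) = cM z n + cM z m - cG z (mu n) (mu m)) &
      (forall (m : MV V) (g : GV V),
         cM z (xact g m) = pact M g (cM z m) + cG z (mu (xact g m)) g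
                           - cG z g (mu m))].
Proof.
rewrite /cM /cG; split.
- move=> H.
  have Hi : forall p h, z p gone h = z p gone gone.
    move=> p h; have := H p gone gone gone h (ginv h).
    rewrite /d2 ?mu1 ?xact_1 ?xact1 ?gmul1x ?gmulx1 pact1 gmulxV.
    linsolve. lin.
  have Ha : forall (m : MV V) (h g : GV V),
         z m h g = z m gone gone - z gone (mu m) h + z gone h g.
    move=> m h g; have := H gone m gone gone h g.
    rewrite /d2 ?mu1 ?xact_1 ?xact1 ?gmul1x ?gmulx1 pact1 Hi.
    linsolve. lin.
  have Hb : is_group_2cocycle (fun h g => z gone h g).
    move=> r q p; have := H gone gone r gone q p.
    by rewrite /d2 ?mu1 ?xact_1 ?xact1 ?gmul1x ?gmulx1.
  split => //.
  + move=> n m; have := H n m gone gone gone gone.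
    have := Ha n (mu m) gone.
    have := Hb (mu m) gone gone.
    rewrite /d2 ?mu1 ?xact_1 ?xact1 ?gmul1x ?gmulx1 ?pact1 ?pact_mu.
    linsolve. lin.
  + move=> m g; have := H gone gone g m gone gone.
    have := Ha (xact g m) g gone.
    rewrite /d2 ?mu1 ?xact_1 ?xact1 ?gmul1x ?gmulx1 ?pact1.
    linsolve. lin.
- case=> Ha Hb Hc Hd p n k m h g.
  rewrite /d2 (Ha p) (Ha (gmul p n)) (Ha (gmul n (xact k m))) (Ha m) Hc Hc Hd.
  rewrite !pact_add !pactN.
  have B1 := Hb k h g.
  have B2 := Hb (mu p) (mu n) k.
  have B3 := Hb (mu n) (mu (xact k m)) (gmul k h).
  have B4 := Hb (mu n) k (gmul (mu m) h).
  have B5 := Hb (mu (xact k m)) k h.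
  have B6 := Hb k (mu m) h.
  rewrite !pact_mu in B2 B3 B4 B5.
  move: B1 B2 B3 B4 B5 B6.
  rewrite ?muM ?mu_act -?gmulA ?gmulVK ?gmulVx ?gmulx1 -?gmulA ?gmulVK ?gmulVx ?gmulx1.
  linsolve. lin.
Qed.
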